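(* Let $d\geq1$, fix $p_\rho\geq 0$, and let $\hat\rho$ be a $d\times d$ density operator with eigenvalue decomposition $\hat\rho=\sum_{i=1}^d\hat r_i|b_i\rangle\!\langle b_i|$ ($\{b_i\}$ an orthonormal basis). Consider (P1) maximize $\mathrm{Tr}(\hat\rho\sigma)+p_\rho\sqrt{1-\mathrm{Tr}(\sigma^2)}$ over $\sigma\in L(\mathbb C^d)$ subject to $\sigma\geq0$, $\mathrm{Tr}(\sigma)=1$; and (P2) maximize $\sum_{i=1}^d\hat r_is_i+p_\rho\sqrt{1-\sum_{i=1}^ds_i^2}$ over $(s_1,\dots,s_d)\in\mathbb R^d$ subject to $\sum_i s_i=1$, $s_i\geq0$ for all $i$. Then (P1) and (P2) are equivalent: they have the same optimal value, the map $(s_1,\dots,s_d)\mapsto\tilde\sigma=\sum_{i=1}^ds_i|b_i\rangle\!\langle b_i|$ is a one-to-one correspondence between feasible arrays of (P2) and density operators diagonal in the basis $\{b_i\}$, preserving objective values, and for every feasible $\sigma$ of (P1) there is such a $\tilde\sigma$ with objective value at least that of $\sigma$. *)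

(* Defs.v *)
From HB Require Import structures.
From mathcomp Require Import all_boot all_order all_algebra.
From mathcomp.real_closed Require Import complex.
Set Implicit Arguments. Unset Strict Implicit. Unset Printing Implicit Defensive.
Import Order.TTheory GRing.Theory Num.Theory.
Local Open Scope ring_scope.

Section Defs.
Variables (R : rcfType) (d : nat).
Local Notation C := R[i].

Definition adj m n (A : 'M[C]_(m, n)) : 'M[C]_(n, m) := (map_mx (@conjc R) A)^T.

Definition ketbra (v w : 'cV[C]_d) : 'M[C]_d := v *m adj w.

Definition hermitian (A : 'M[C]_d) : Prop := adj A = A.

Definition psd (A : 'M[C]_d) : Prop :=
  hermitian A /\ forall v : 'cV[C]_d, 0 <= (adj v *m A *m v) 0 0.

Definition density (A : 'M[C]_d) : Prop := psd A /\ \tr A = 1.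

Definition orthonormal_basis (b : 'I_d -> 'cV[C]_d) : Prop :=
  forall i j, (adj (b i) *m b j) 0 0 = (i == j)%:R.

(* objective of (P1): Tr(rho sigma) + p sqrt(1 - Tr(sigma^2));
   the traces are real for Hermitian arguments, we take their real parts *)
Definition obj1 (rho : 'M[C]_d) (p : R) (sigma : 'M[C]_d) : R :=
  @complex.Re R (\tr (rho *m sigma)) + p * Num.sqrt (1 - @complex.Re R (\tr (sigma *m sigma))).

Definition feasible2 (s : 'I_d -> R) : Prop :=
  \sum_i s i = 1 /\ forall i, 0 <= s i.

Definition obj2 (r : 'I_d -> R) (p : R) (s : 'I_d -> R) : R :=
  \sum_i r i * s i + p * Num.sqrt (1 - \sum_i s i ^+ 2).

Definition sigma_tilde (b : 'I_d -> 'cV[C]_d) (s : 'I_d -> R) : 'M[C]_d :=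
  \sum_i (s i)%:C%C *: ketbra (b i) (b i).

Definition diag_in (b : 'I_d -> 'cV[C]_d) (sigma : 'M[C]_d) : Prop :=
  exists c : 'I_d -> C, sigma = \sum_i c i *: ketbra (b i) (b i).

End Defs.

(* Main.v *)
Require Import Defs.
From HB Require Import structures.
From mathcomp Require Import all_boot all_order all_algebra.
From mathcomp.real_closed Require Import complex.
Import Order.TTheory GRing.Theory Num.Theory.
Local Open Scope ring_scope.

Section H.
Variables (R : rcfType) (d : nat) (b : 'I_d -> 'cV[R[i]]_d).
Local Notation C := R[i].
Local Notation Re := (@complex.Re R).
Hypothesis hb : orthonormal_basis b.

Definition Bm : 'M[C]_d := \matrix_(k, i) b i k 0.
Definition Dg (c : 'I_d -> C) : 'M[C]_d := diag_mx (\row_i c i).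
Definition Nm (M : 'M[C]_d) := adj Bm *m M *m Bm.

Lemma adjM m n q (A : 'M[C]_(m,n)) (B : 'M[C]_(n,q)) : adj (A *m B) = adj B *m adj A.
Proof. by rewrite /adj map_mxM trmx_mul. Qed.

Lemma adjK m n (A : 'M[C]_(m,n)) : adj (adj A) = A.
Proof. by apply/matrixP=> i j; rewrite !mxE conjcK. Qed.

Lemma adjE m n (A : 'M[C]_(m,n)) i j : adj A i j = (A j i)^*%C.
Proof. by rewrite !mxE. Qed.

Lemma ketbraE (v w : 'cV[C]_d) k l : ketbra v w k l = v k 0 * (w l 0)^*%C.
Proof. by rewrite /ketbra mxE big_ord1 !mxE. Qed.

Lemma BtB : adj Bm *m Bm = 1.
Proof.
apply/matrixP=> i j; rewrite [RHS]mxE -(hb i j) !mxE.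
by apply: eq_bigr => k _; rewrite !mxE.
Qed.

Lemma BBt : Bm *m adj Bm = 1.
Proof. exact: mulmx1C BtB. Qed.

Lemma sum_ketbra c : \sum_i c i *: ketbra (b i) (b i) = Bm *m Dg c *m adj Bm.
Proof.
apply/matrixP=> k l; rewrite summxE mul_mx_diag mxE.
by apply: eq_bigr => i _; rewrite !mxE big_ord1 adjE mulrCA mulrA.
Qed.

Lemma NmK X : Nm (Bm *m X *m adj Bm) = X.
Proof.
by rewrite /Nm !mulmxA BtB mul1mx -mulmxA BtB mulmx1.
Qed.

Lemma NmE M : M = Bm *m Nm M *m adj Bm.
Proof. by rewrite /Nm !mulmxA BBt mul1mx -mulmxA BBt mulmx1. Qed.

Lemma conjB X Y : (Bm *m X *m adj Bm) *m (Bm *m Y *m adj Bm) = Bm *m (X *m Y) *m adj Bm.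
Proof.
by rewrite -!mulmxA (mulmxA (adj Bm)) BtB mul1mx.
Qed.

Lemma trB X : \tr (Bm *m X *m adj Bm) = \tr X.
Proof. by rewrite mxtrace_mulC mulmxA BtB mul1mx. Qed.

Lemma entryN M i j : Nm M i j = (adj (b i) *m M *m b j) 0 0.
Proof.
rewrite /Nm !mxE; apply: eq_bigr => k _; rewrite !mxE; congr (_ * _).
by apply: eq_bigr => l _; rewrite !mxE.
Qed.

Lemma trDN c N : \tr (Dg c *m N) = \sum_i c i * N i i.
Proof. by rewrite mul_diag_mx /mxtrace; apply: eq_bigr => i _; rewrite !mxE. Qed.

Lemma Re_sum (I : Type) (r : seq I) (P : pred I) (F : I -> C) :
  Re (\sum_(i <- r | P i) F i) = \sum_(i <- r | P i) Re (F i).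
Proof. elim/big_rec2: _ => [|i y1 y2 _ <-]; first by []. by case: (F i); case: y2. Qed.

Lemma ReD (x y : C) : Re (x + y) = Re x + Re y.
Proof. by case: x; case: y. Qed.

Lemma real_ge0 (z : C) : 0 <= z -> z = (Re z)%:C%C.
Proof. by move=> /ger0_Im; case: z => a c /= ->. Qed.

Lemma ReCC (x y : R) : Re (x%:C%C * y%:C%C) = x * y.
Proof. by rewrite /= mul0r subr0. Qed.


Lemma herm_N (M : 'M[C]_d) : Defs.hermitian M -> forall i j, Nm M j i = (Nm M i j)^*%C.
Proof.
move=> hM; have H : adj (Nm M) = Nm M by rewrite /Nm !adjM adjK hM mulmxA.
by move=> i j; rewrite -{1}H adjE.
Qed.

Lemma psd_N (M : 'M[C]_d) : psd M -> forall i, 0 <= Nm M i i.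
Proof. by case=> _ h i; rewrite entryN; apply: h. Qed.

Lemma dens_s (M : 'M[C]_d) : density M ->
  feasible2 (fun i => Re (Nm M i i)) /\ forall i, Nm M i i = (Re (Nm M i i))%:C%C.
Proof.
case=> hps htr; have h0 := psd_N _ hps.
split; last by move=> i; apply: real_ge0.
split.
  have e : \tr M = \sum_i Nm M i i by rewrite {1}(NmE M) trB.
  by rewrite -Re_sum -e htr.
move=> i; move: (h0 i); rewrite lecE => /andP[_ h]; exact: h.
Qed.

Lemma st_eq (s : 'I_d -> R) : sigma_tilde b s = Bm *m Dg (fun i => (s i)%:C%C) *m adj Bm.
Proof. exact: sum_ketbra. Qed.

Lemma adjDg (s : 'I_d -> R) : adj (Dg (fun i => (s i)%:C%C)) = Dg (fun i => (s i)%:C%C).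
Proof.
apply/matrixP=> i j; rewrite !mxE; case: (eqVneq i j) => [->|ne].
  by rewrite !mulr1n conjc_real.
by rewrite !mulr0n conjc0.
Qed.

Lemma st_density (s : 'I_d -> R) : feasible2 s -> density (sigma_tilde b s).
Proof.
case=> hs1 hs0; rewrite st_eq; split; [split|].
- by rewrite /Defs.hermitian !adjM adjK adjDg mulmxA.
- move=> v; set w := adj Bm *m v.
  have -> : adj v *m (Bm *m Dg (fun i => (s i)%:C%C) *m adj Bm) *m v
           = adj w *m Dg (fun i => (s i)%:C%C) *m w by rewrite /w adjM adjK !mulmxA.
  rewrite mul_mx_diag mxE; apply: sumr_ge0 => k _; rewrite !mxE.
  rewrite mulrAC; apply: mulr_ge0; last by rewrite ler0c.
  by rewrite mulrC mulcJ_ge0.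
- rewrite trB mxtrace_diag.
  under eq_bigr do rewrite mxE.
  by rewrite -raddf_sum hs1.
Qed.

Lemma Nm_st (s : 'I_d -> R) : Nm (sigma_tilde b s) = Dg (fun i => (s i)%:C%C).
Proof. by rewrite st_eq NmK. Qed.


Lemma obj_st (r : 'I_d -> R) (p : R) (rho : 'M[C]_d) (s : 'I_d -> R) :
  rho = \sum_i (r i)%:C%C *: ketbra (b i) (b i) ->
  obj1 rho p (sigma_tilde b s) = obj2 r p s.
Proof.
move=> hdec; rewrite /obj1 /obj2 st_eq hdec sum_ketbra !conjB !trB !trDN !Re_sum.
congr (_ + _ * Num.sqrt (1 - _)); apply: eq_bigr => i _;
  by rewrite !mxE eqxx !mulr1n ReCC ?expr2.
Qed.

Lemma dom (r : 'I_d -> R) (p : R) (rho M : 'M[C]_d) : 0 <= p ->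
  rho = \sum_i (r i)%:C%C *: ketbra (b i) (b i) -> density M ->
  obj1 rho p M <= obj2 r p (fun i => Re (Nm M i i)).
Proof.
move=> hp hdec hM.
have [[hs1 hs0] hN] := dens_s _ hM.
have hh := herm_N _ hM.1.1.
have E := NmE M.
set N := Nm M in E hs1 hs0 hN hh *.
rewrite /obj1 /obj2 E hdec sum_ketbra !conjB !trB trDN.
apply: lerD.
  rewrite Re_sum le_eqVlt; apply/orP; left; apply/eqP; apply: eq_bigr => i _.
  by rewrite [in LHS]hN ReCC.
apply: ler_wpM2l => //; apply: ler_wsqrtr.
rewrite lerD2l lerN2 /mxtrace Re_sum; apply: ler_sum => i _.
rewrite [(N *m N) i i]mxE (bigD1 i) //= ReD.
have -> : complex.Re (N i i * N i i) = complex.Re (N i i) ^+ 2 by rewrite {1 2}hN ReCC expr2.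
rewrite lerDl.
have : 0 <= \sum_(j < d | j != i) N i j * N j i.
  by apply: sumr_ge0 => j _; rewrite (hh i j) mulcJ_ge0.
rewrite lecE => /andP[_ h]; exact: h.
Qed.

End H.
Arguments Nm {R d} b M.
Arguments Dg {R d} c.
Arguments Bm {R d} b.
Arguments obj_st {R d} b hb r p rho s.
Arguments dens_s {R d} b hb M.
Arguments dom {R d} b hb r p rho M.
Arguments st_density {R d} b hb s.
Arguments Nm_st {R d} b hb s.
Arguments sum_ketbra {R d} b c.
Arguments NmK {R d} b hb X.

Theorem lemma1 (R : rcfType) (d : nat) (hd : (0 < d)%N) (p : R) (hp : 0 <= p)
  (rho : 'M[R[i]]_d) (r : 'I_d -> R) (b : 'I_d -> 'cV[R[i]]_d)
  (hrho : density rho) (hb : orthonormal_basis b)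
  (hdec : rho = \sum_i (r i)%:C%C *: ketbra (b i) (b i)) :
  (* same optimal value: same upper bounds (hence same supremum) ... *)
  (forall v : R,
     (forall sigma, density sigma -> obj1 rho p sigma <= v) <->
     (forall s, feasible2 s -> obj2 r p s <= v)) /\
  (* ... and v is the (attained) optimum of (P1) iff it is that of (P2) *)
  (forall v : R,
     ((exists sigma, density sigma /\ obj1 rho p sigma = v) /\
      (forall sigma, density sigma -> obj1 rho p sigma <= v)) <->
     ((exists s, feasible2 s /\ obj2 r p s = v) /\
      (forall s, feasible2 s -> obj2 r p s <= v))) /\
  (* s |-> sigma~ maps feasible arrays to density operators diagonal in {b_i} *)
  (forall s, feasible2 s -> density (sigma_tilde b s) /\ diag_in b (sigma_tilde b s)) /\
  (* injective on feasible arrays *)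
  (forall s s', feasible2 s -> feasible2 s' ->
     sigma_tilde b s = sigma_tilde b s' -> s =1 s') /\
  (* surjective onto density operators diagonal in {b_i} *)
  (forall sigma, density sigma -> diag_in b sigma ->
     exists s, feasible2 s /\ sigma = sigma_tilde b s) /\
  (* preserves objective values *)
  (forall s, feasible2 s -> obj1 rho p (sigma_tilde b s) = obj2 r p s) /\
  (* every feasible sigma is dominated by some diagonal sigma~ *)
  (forall sigma, density sigma ->
     exists s, feasible2 s /\ obj1 rho p sigma <= obj1 rho p (sigma_tilde b s)).
Proof.
have st_obj := fun s => obj_st b hb r p rho s hdec.
have dom' : forall sigma, density sigma -> exists s, feasible2 s /\
    obj1 rho p sigma <= obj1 rho p (sigma_tilde b s).
  move=> sigma hs; exists (fun i => @complex.Re R (Nm b sigma i i)); split.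
    by case: (dens_s b hb _ hs).
  by rewrite st_obj; apply: dom.
have P1 : forall v : R,
     (forall sigma, density sigma -> obj1 rho p sigma <= v) <->
     (forall s, feasible2 s -> obj2 r p s <= v).
  move=> v; split=> H.
    by move=> s hs; rewrite -st_obj; apply: H; apply: st_density.
  move=> sigma hs; have [s [fs le]] := dom' _ hs.
  by apply: le_trans le _; rewrite st_obj; apply: H.
split; first exact: P1.
split.
  move=> v; split=> -[[x [hx ex]] H]; split; try by apply/P1.
    have [s [fs le]] := dom' _ hx; exists s; split => //.
    rewrite -st_obj; apply/le_anti/andP; split.
      by apply: H; apply: st_density.
    by rewrite -ex.
  exists (sigma_tilde b x); split; [exact: st_density | by rewrite st_obj].
split.
  move=> s hs; split; first exact: st_density.
  by exists (fun i => (s i)%:C%C).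
split.
  move=> s s' _ _ e i; have := congr1 (fun M => Nm b M i i) e.
  by rewrite /= !(Nm_st b hb) !mxE eqxx !mulr1n => /complexI.
split.
  move=> sigma hs [c hc].
  have [fs hN] := dens_s b hb _ hs.
  exists (fun i => @complex.Re R (Nm b sigma i i)); split => //.
  have hNc : Nm b sigma = Dg c by rewrite hc sum_ketbra NmK.
  rewrite {1}hc /sigma_tilde; apply: eq_bigr => i _; congr (_ *: _).
  by rewrite -hN hNc !mxE eqxx mulr1n.
split; first by move=> s _; apply: st_obj.
exact: dom'.
Qed.
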